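(* Let $\mathcal C$ be a pointed category with finite coproducts, $E\in\mathcal C$, and $M$ a proto-quadratic $\mathcal C$-module relative to $E$. Then the functor $-\otimes M\colon\mathcal C\to Ab$ (quadratic tensor product) is a quadratic functor, i.e. its third cross-effect vanishes.
   Context: Notation. - $i_k,r_k$ are the coproduct injections and retractions, $\nabla$ the folding map, $\tau$ the switch. Functors and cross-effects. - For a reduced functor $F\colon\mathcal C\to Ab$: $cr_2F(X,Y)=\ker(F(X\vee Y)\to F(X)\oplus F(Y))$ and $cr_3F(X,Y,Z)=cr_2(cr_2F(-,Z))(X,Y)$; $F$ is quadratic if $cr_3F=0$. - $T_1F(X)=\mathrm{coker}(cr_2F(X,X)\subseteq F(X\vee X)\xrightarrow{F(\nabla)}F(X))$, with projection $t_1$. - For a bireduced bifunctor $B$, $T_{11}B$ is the quotient of $B(X,Y)$ by the images of $cr_2(B(-,Y))(X,X)$ under $B(\nabla,1)$ and of $cr_2(B(X,-))(Y,Y)$ under $B(1,\nabla)$; $t_{11}$ is the projection. The functor $U$ and the rings. - $U(X)=\mathbb Z[\mathcal C(E,X)]/\mathbb Z\cdot0$; $\Lambda=U(E)$ is a ring under composition; $\bar\Lambda=T_1U(E)$ and $\bar\alpha=t_1\alpha$. Proto-quadratic $\mathcal C$-modules. - $U(E|E)=cr_2U(E,E)$ has $\Lambda\otimes\Lambda$-action via $U(\alpha\vee\beta)$, involution $U(\tau)$ and right $\Lambda$-action by precomposition, descending to $T_{11}(cr_2U)(E,E)$. - $\rho(\xi)=\xi-i_1r_1\xi-i_2r_2\xi$.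 - A symmetric $R\otimes R$-module is a left module with involution $T$ satisfying $T((r\otimes s)m)=(s\otimes r)Tm$. - A proto-quadratic $\mathcal C$-module is $M=(T_{11}(cr_2U)(E,E)\otimes_\Lambda M_e\xrightarrow{\hat H}M_{ee}\xrightarrow{T}M_{ee}\xrightarrow{P}M_e)$ such that: - $M_e$ is a left $\Lambda$-module; - $M_{ee}$ is a symmetric $\bar\Lambda\otimes\bar\Lambda$-module with involution $T$; - $P((\bar\alpha\otimes\bar\alpha)m)=\alpha Pm$ and $PT=P$; - $\hat H$ is a symmetric-module homomorphism; - (QM1) $(\nabla\xi)a=(r_1\xi)a+(r_2\xi)a+P\hat H(t_{11}\rho(\xi)\otimes a)$. Quadratic tensor product. $X\otimes M$ is the abelian group generated by $f\otimes a$ and $[f,g]\otimes m$ ($f,g\in\mathcal C(E,X)$), subject to: 1. $f\beta\otimes a=f\otimes\beta a$; 2. additivity in $a$; 3. $\sum_{\emptyset\ne S\subseteq\{1,2,3\}}(-1)^{3-|S|}\epsilon_S\xi\otimes a=0$ for $\xi\in\mathcal C(E,X^{\vee3})$, where $\epsilon_S$ is the identity on the summands in $S$ and zero elsewhere; 4. $[f\alpha,g\beta]\otimes m=[f,g]\otimes(\bar\alpha\otimes\bar\beta)m$; 5. additivity in $m$; 6. $[\nabla\xi,g]\otimes m=[r_1\xi,g]\otimes m+[r_2\xi,g]\otimes m$; 7. $[f,g]\otimes m=[g,f]\otimes Tm$; 8. $[f,f]\otimes m=f\otimes Pm$; 9. $(f,g)\gamma\otimes a=fr_1\gamma\otimes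 a+gr_2\gamma\otimes a+[f,g]\otimes\hat H(t_{11}\rho(\gamma)\otimes a)$. A morphism $h$ acts by $f\mapsto hf$ in the symbols. *)

(* Defs.v *)
From HB Require Import structures.
From mathcomp Require Import all_boot all_algebra.
Set Implicit Arguments. Unset Strict Implicit. Unset Printing Implicit Defensive.
Import GRing.Theory.
Local Open Scope ring_scope.

Record PCat := {
  obj :> Type;
  hom : obj -> obj -> Type;
  idm : forall X, hom X X;
  comp : forall X Y Z, hom Y Z -> hom X Y -> hom X Z;
  comp_idl : forall X Y (f : hom X Y), comp (idm Y) f = f;
  comp_idr : forall X Y (f : hom X Y), comp f (idm X) = f;
  comp_assoc : forall X Y Z W (h : hom Z W) (g : hom Y Z) (f : hom X Y),
      comp h (comp g f) = comp (comp h g) f;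
  zobj : obj;
  zto : forall X, hom X zobj;
  zfrom : forall X, hom zobj X;
  zto_uniq : forall X (f : hom X zobj), f = zto X;
  zfrom_uniq : forall X (f : hom zobj X), f = zfrom X;
  cop : obj -> obj -> obj;
  in1 : forall X Y, hom X (cop X Y);
  in2 : forall X Y, hom Y (cop X Y);
  copair : forall X Y Z, hom X Z -> hom Y Z -> hom (cop X Y) Z;
  copair_in1 : forall X Y Z (f : hom X Z) (g : hom Y Z),
      comp (copair f g) (in1 X Y) = f;
  copair_in2 : forall X Y Z (f : hom X Z) (g : hom Y Z),
      comp (copair f g) (in2 X Y) = g;
  copair_uniq : forall X Y Z (f : hom X Z) (g : hom Y Z) (h : hom (cop X Y) Z),
      comp h (in1 X Y) = f -> comp h (in2 X Y) = g -> h = copair f g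
}.
Arguments hom {p} _ _.
Arguments idm {p} X.
Arguments comp {p X Y Z} _ _.
Arguments zobj {p}.
Arguments zto {p} X.
Arguments zfrom {p} X.
Arguments cop {p} _ _.
Arguments in1 {p} X Y.
Arguments in2 {p} X Y.
Arguments copair {p X Y Z} _ _.

Section CatDefs.
Variable C : PCat.
Definition zerom (X Y : C) : hom X Y := comp (zfrom Y) (zto X).
Definition ret1 (X Y : C) : hom (cop X Y) X := copair (idm X) (zerom Y X).
Definition ret2 (X Y : C) : hom (cop X Y) Y := copair (zerom X Y) (idm Y).
Definition fold (X : C) : hom (cop X X) X := copair (idm X) (idm X).
Definition swap (X Y : C) : hom (cop X Y) (cop Y X) := copair (in2 Y X) (in1 Y X).
Definition summ (X Y X' Y' : C) (f : hom X X') (g : hom Y Y')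
  : hom (cop X Y) (cop X' Y') := copair (comp (in1 X' Y') f) (comp (in2 X' Y') g).
End CatDefs.
Arguments zerom {C} X Y.
Arguments ret1 {C} X Y.
Arguments ret2 {C} X Y.
Arguments fold {C} X.
Arguments swap {C} X Y.
Arguments summ {C X Y X' Y'} f g.

(* fterm G = formal Z-linear expressions in generators G; pres_eq R is the   *)
(* congruence: equal in the abelian group generated by G subject to the      *)
(* relations t = 0 for R t, i.e. the free abelian group Z[G] modulo the     *)
(* subgroup generated by R.                                                  *)
Inductive fterm (G : Type) : Type :=
  | FZ | FG of G | FAdd of fterm G & fterm G | FOpp of fterm G.
Arguments FZ {G}.
Arguments FG {G} _.
Arguments FAdd {G} _ _.
Arguments FOpp {G} _.

Definition FSub (G : Type) (t u : fterm G) := FAdd t (FOpp u).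

Fixpoint fmap (G H : Type) (h : G -> H) (t : fterm G) : fterm H :=
  match t with
  | FZ => FZ
  | FG g => FG (h g)
  | FAdd t1 t2 => FAdd (fmap h t1) (fmap h t2)
  | FOpp t1 => FOpp (fmap h t1)
  end.

Fixpoint feval (G : Type) (V : zmodType) (v : G -> V) (t : fterm G) : V :=
  match t with
  | FZ => 0
  | FG g => v g
  | FAdd t1 t2 => feval v t1 + feval v t2
  | FOpp t1 => - feval v t1
  end.

Inductive pres_eq (G : Type) (R : fterm G -> Prop) : fterm G -> fterm G -> Prop :=
  | pe_refl t : pres_eq R t t
  | pe_sym t u : pres_eq R t u -> pres_eq R u t
  | pe_trans t u v : pres_eq R t u -> pres_eq R u v -> pres_eq R t v
  | pe_add t t' u u' : pres_eq R t t' -> pres_eq R u u' ->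
      pres_eq R (FAdd t u) (FAdd t' u')
  | pe_opp t t' : pres_eq R t t' -> pres_eq R (FOpp t) (FOpp t')
  | pe_assoc t u v : pres_eq R (FAdd (FAdd t u) v) (FAdd t (FAdd u v))
  | pe_comm t u : pres_eq R (FAdd t u) (FAdd u t)
  | pe_zerol t : pres_eq R (FAdd FZ t) t
  | pe_oppl t : pres_eq R (FAdd (FOpp t) t) FZ
  | pe_rel t : R t -> pres_eq R t FZ.

(* The functor U(X) = Z[C(E,X)] / Z.0, on representatives.                   *)
Section UFunctor.
Variables (C : PCat) (E : C).

Definition Urel (X : C) (t : fterm (hom E X)) : Prop := t = FG (zerom E X).
Definition Ueq (X : C) := pres_eq (@Urel X).
Definition Umap (X Y : C) (h : hom X Y) := fmap (fun f : hom E X => comp h f).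

(* u in cr_2 U(X,Y) = ker (U(X v Y) -> U(X) (+) U(Y)) *)
Definition in_cr2U (X Y : C) (u : fterm (hom E (cop X Y))) : Prop :=
  Ueq (Umap (ret1 X Y) u) FZ /\ Ueq (Umap (ret2 X Y) u) FZ.

(* w in cr_2(B(-,E))(E,E) where B = cr_2U, as a subgroup of U((EvE)vE) *)
Definition in_cr2_left (w : fterm (hom E (cop (cop E E) E))) : Prop :=
  in_cr2U w /\
  Ueq (Umap (summ (ret1 E E) (idm E)) w) FZ /\
  Ueq (Umap (summ (ret2 E E) (idm E)) w) FZ.

(* w in cr_2(B(E,-))(E,E), as a subgroup of U(Ev(EvE)) *)
Definition in_cr2_right (w : fterm (hom E (cop E (cop E E)))) : Prop :=
  in_cr2U w /\
  Ueq (Umap (summ (idm E) (ret1 E E)) w) FZ /\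
  Ueq (Umap (summ (idm E) (ret2 E E)) w) FZ.

Definition rho (xi : hom E (cop E E)) : fterm (hom E (cop E E)) :=
  FSub (FSub (FG xi) (FG (comp (in1 E E) (comp (ret1 E E) xi))))
       (FG (comp (in2 E E) (comp (ret2 E E) xi))).

Definition Uprecomp (X : C) (lam : hom E E) :=
  fmap (fun f : hom E X => comp f lam).
End UFunctor.

(*  - lact : left Lambda-module structure on M_e, Lambda = Z[C(E,E)]/Z.0,  *)
(*    given on the additive basis C(E,E) (a ring map Z[C(E,E)] -> End(M_e)  *)
(*    killing 0 is the same as a monoid action by additive maps with 0 ->0).*)
(*  - actb : the (bar Lambda (x) bar Lambda)-action on M_ee, given on basis *)
(*    tensors alpha (x) beta, factoring through                             *)
(*    bar Lambda = T_1 U(E) = U(E) / U(fold)(cr_2U(E,E)) in each variable.  *)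
(*  - H : the homomorphism hat H : T_11(cr_2U)(E,E) (x)_Lambda M_e -> M_ee, *)
(*    given as a function on (representatives u of cr_2U(E,E)) x M_e that   *)
(*    respects all the defining relations of that tensor product (values   *)
(*    on terms u not in cr_2U(E,E) are irrelevant).                        *)
Record ProtoQuad (C : PCat) (E : C) := {
  Me : zmodType;
  Mee : zmodType;
  lact : hom E E -> Me -> Me;
  actb : hom E E -> hom E E -> Mee -> Mee;
  Tinv : Mee -> Mee;
  Pm : Mee -> Me;
  Hh : fterm (hom E (cop E E)) -> Me -> Mee;
  lact_add : forall al a b, lact al (a + b) = lact al a + lact al b;
  lact_id : forall a, lact (idm E) a = a;
  lact_comp : forall al be a, lact (comp al be) a = lact al (lact be a);
  lact_zero : forall a, lact (zerom E E) a = 0;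
  actb_add : forall al be m n, actb al be (m + n) = actb al be m + actb al be n;
  actb_id : forall m, actb (idm E) (idm E) m = m;
  actb_comp : forall al al' be be' m,
      actb (comp al al') (comp be be') m = actb al be (actb al' be' m);
  actb_zerol : forall be m, actb (zerom E E) be m = 0;
  actb_zeror : forall al m, actb al (zerom E E) m = 0;
  actb_T1l : forall (u : fterm (hom E (cop E E))) be m, in_cr2U u ->
      feval (fun al => actb al be m) (Umap (fold E) u) = 0;
  actb_T1r : forall (u : fterm (hom E (cop E E))) al m, in_cr2U u ->
      feval (fun be => actb al be m) (Umap (fold E) u) = 0;
  T_add : forall m n, Tinv (m + n) = Tinv m + Tinv n;
  T_invol : forall m, Tinv (Tinv m) = m;
  T_actb : forall al be m, Tinv (actb al be m) = actb be al (Tinv m);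
  P_add : forall m n, Pm (m + n) = Pm m + Pm n;
  P_actb : forall al m, Pm (actb al al m) = lact al (Pm m);
  P_T : forall m, Pm (Tinv m) = Pm m;
  H_compat : forall u u' a, in_cr2U u -> in_cr2U u' -> Ueq u u' -> Hh u a = Hh u' a;
  H_addl : forall u u' a, in_cr2U u -> in_cr2U u' ->
      Hh (FAdd u u') a = Hh u a + Hh u' a;
  H_addr : forall u a b, in_cr2U u -> Hh u (a + b) = Hh u a + Hh u b;
  H_T11l : forall w a, in_cr2_left w -> Hh (Umap (summ (fold E) (idm E)) w) a = 0;
  H_T11r : forall w a, in_cr2_right w -> Hh (Umap (summ (idm E) (fold E)) w) a = 0;
  H_bal : forall u lam a, in_cr2U u -> Hh (Uprecomp lam u) a = Hh u (lact lam a);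
  H_actb : forall u al be a, in_cr2U u ->
      Hh (Umap (summ al be) u) a = actb al be (Hh u a);
  H_T : forall u a, in_cr2U u -> Hh (Umap (swap E E) u) a = Tinv (Hh u a);
  QM1 : forall (xi : hom E (cop E E)) a,
      lact (comp (fold E) xi) a =
      lact (comp (ret1 E E) xi) a + lact (comp (ret2 E E) xi) a
      + Pm (Hh (rho xi) a)
}.
Arguments Me {C E} _.
Arguments Mee {C E} _.
Arguments lact {C E} _ _ _.
Arguments actb {C E} _ _ _ _.
Arguments Tinv {C E} _ _.
Arguments Pm {C E} _ _.
Arguments Hh {C E} _ _ _.

Section Tensor.
Variables (C : PCat) (E : C) (M : ProtoQuad E).

Inductive tgen (X : C) : Type :=
  | TG1 of hom E X & Me M
  | TG2 of hom E X & hom E X & Mee M.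

Definition epsm (X : C) (b1 b2 b3 : bool) : hom (cop (cop X X) X) X :=
  let e b := if b then idm X else zerom X X in
  copair (copair (e b1) (e b2)) (e b3).

Inductive tensor_rel (X : C) : fterm (tgen X) -> Prop :=
  | tr1 (f : hom E X) (be : hom E E) (a : Me M) :
      tensor_rel (FSub (FG (TG1 (comp f be) a)) (FG (TG1 f (lact M be a))))
  | tr2 (f : hom E X) (a b : Me M) :
      tensor_rel (FSub (FG (TG1 f (a + b))) (FAdd (FG (TG1 f a)) (FG (TG1 f b))))
  | tr3 (xi : hom E (cop (cop X X) X)) (a : Me M) :
      let s (b1 b2 b3 : bool) := FG (TG1 (comp (@epsm X b1 b2 b3) xi) a) in
      tensor_rel
        (FAdd (FSub (FSub (FSub (s true true true) (s true true false))
                          (s true false true)) (s false true true))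
              (FAdd (s true false false) (FAdd (s false true false) (s false false true))))
  | tr4 (f g : hom E X) (al be : hom E E) (m : Mee M) :
      tensor_rel (FSub (FG (TG2 (comp f al) (comp g be) m))
                       (FG (TG2 f g (actb M al be m))))
  | tr5 (f g : hom E X) (m n : Mee M) :
      tensor_rel (FSub (FG (TG2 f g (m + n)))
                       (FAdd (FG (TG2 f g m)) (FG (TG2 f g n))))
  | tr6 (xi : hom E (cop X X)) (g : hom E X) (m : Mee M) :
      tensor_rel (FSub (FG (TG2 (comp (fold X) xi) g m))
                       (FAdd (FG (TG2 (comp (ret1 X X) xi) g m))
                             (FG (TG2 (comp (ret2 X X) xi) g m))))
  | tr7 (f g : hom E X) (m : Mee M) :
      tensor_rel (FSub (FG (TG2 f g m)) (FG (TG2 g f (Tinv M m))))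
  | tr8 (f : hom E X) (m : Mee M) :
      tensor_rel (FSub (FG (TG2 f f m)) (FG (TG1 f (Pm M m))))
  | tr9 (f g : hom E X) (ga : hom E (cop E E)) (a : Me M) :
      tensor_rel (FSub (FG (TG1 (comp (copair f g) ga) a))
                       (FAdd (FAdd (FG (TG1 (comp f (comp (ret1 E E) ga)) a))
                                   (FG (TG1 (comp g (comp (ret2 E E) ga)) a)))
                             (FG (TG2 f g (Hh M (rho ga) a))))).

Definition teq (X : C) := pres_eq (@tensor_rel X).

Definition tgen_map (X Y : C) (h : hom X Y) (x : tgen X) : tgen Y :=
  match x with
  | TG1 f a => TG1 (comp h f) a
  | TG2 f g m => TG2 (comp h f) (comp h g) m
  end.
Definition tmap (X Y : C) (h : hom X Y) := fmap (tgen_map h).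

(* t represents an element of cr_3(- (x) M)(X,Y,Z)
   = cr_2(cr_2(- (x) M)(-,Z))(X,Y), a subgroup of ((X v Y) v Z) (x) M:
   its images in (XvY)(x)M and Z(x)M vanish (so it is in cr_2(-(x)M)(XvY,Z)),
   and its images under r1 v 1 and r2 v 1 in X v Z and Y v Z vanish. *)
Definition in_cr3_tensor (X Y Z : C) (t : fterm (tgen (cop (cop X Y) Z))) : Prop :=
  teq (tmap (ret1 (cop X Y) Z) t) FZ /\
  teq (tmap (ret2 (cop X Y) Z) t) FZ /\
  teq (tmap (summ (ret1 X Y) (idm Z)) t) FZ /\
  teq (tmap (summ (ret2 X Y) (idm Z)) t) FZ.

Definition tensor_quadratic : Prop :=
  forall (X Y Z : C) (t : fterm (tgen (cop (cop X Y) Z))),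
    in_cr3_tensor t -> teq t FZ.
End Tensor.

(* Main.v *)
Require Import Defs.
From HB Require Import structures.
From mathcomp Require Import all_boot all_algebra.
From mathcomp Require Import boolp.
Require Import Defs.
Set Implicit Arguments. Unset Strict Implicit. Unset Printing Implicit Defensive.
Import GRing.Theory.
Local Open Scope ring_scope.

Section Quot.
Variables (G : Type) (R : fterm G -> Prop).
Local Notation peq := (pres_eq R).

Lemma peq_ext t u : peq t u -> peq t = peq u.
Proof.
move=> h; apply/funext => v; apply/propext; split => hv.
  exact: pe_trans (pe_sym h) hv.
exact: pe_trans h hv.
Qed.

Definition QT := {P : fterm G -> Prop | exists t, P = peq t}.
Definition cls (t : fterm G) : QT := exist _ (peq t) (ex_intro _ t erefl).

Lemma cls_eqP t u : cls t = cls u <-> peq t u.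
Proof.
split=> [h|h]; last by apply: eq_exist; apply: peq_ext.
have: proj1_sig (cls t) = proj1_sig (cls u) by rewrite h.
move=> /= e; rewrite e; exact: pe_refl.
Qed.

Definition rep (q : QT) : fterm G := proj1_sig (cid (proj2_sig q)).
Lemma repK q : cls (rep q) = q.
Proof.
case: q => P hP; rewrite /rep /=; case: (cid hP) => t ht /=.
by apply: eq_exist.
Qed.

Lemma cls_rep t : peq (rep (cls t)) t.
Proof. by apply/cls_eqP; rewrite repK. Qed.

HB.instance Definition _ := gen_eqMixin QT.
HB.instance Definition _ := gen_choiceMixin QT.

Definition qadd (a b : QT) := cls (FAdd (rep a) (rep b)).
Definition qopp (a : QT) := cls (FOpp (rep a)).
Definition qzero := cls FZ.

Lemma qaddE t u : qadd (cls t) (cls u) = cls (FAdd t u).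
Proof. apply/cls_eqP; apply: pe_add; exact: cls_rep. Qed.
Lemma qoppE t : qopp (cls t) = cls (FOpp t).
Proof. apply/cls_eqP; apply: pe_opp; exact: cls_rep. Qed.

Lemma qaddA : associative qadd.
Proof.
move=> a b c; rewrite -(repK a) -(repK b) -(repK c) !qaddE.
apply/cls_eqP; apply: pe_sym; exact: pe_assoc.
Qed.
Lemma qaddC : commutative qadd.
Proof.
move=> a b; rewrite -(repK a) -(repK b) !qaddE; apply/cls_eqP; exact: pe_comm.
Qed.
Lemma qadd0 : left_id qzero qadd.
Proof. move=> a; rewrite -(repK a) qaddE; apply/cls_eqP; exact: pe_zerol. Qed.
Lemma qaddN : left_inverse qzero qopp qadd.
Proof. move=> a; rewrite -(repK a) qoppE qaddE; apply/cls_eqP; exact: pe_oppl. Qed.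

HB.instance Definition _ := GRing.isZmodule.Build QT qaddA qaddC qadd0 qaddN.

Lemma clsD t u : cls (FAdd t u) = cls t + cls u.
Proof. by rewrite -qaddE. Qed.
Lemma clsN t : cls (FOpp t) = - cls t.
Proof. by rewrite -qoppE. Qed.
Lemma cls0 : cls FZ = 0.
Proof. by []. Qed.
Lemma clsB t u : cls (FSub t u) = cls t - cls u.
Proof. by rewrite /FSub clsD clsN. Qed.
Lemma cls_rel t : R t -> cls t = 0.
Proof. by move=> h; apply/cls_eqP; apply: pe_rel. Qed.
Lemma cls_feval t : cls t = feval (fun x => cls (FG x)) t.
Proof. by elim: t => //= [t IHt u IHu|t IHt]; rewrite ?clsD ?clsN ?IHt ?IHu. Qed.
End Quot.

Section CatL.
Variable C : PCat.

Lemma comp_zl (X Y Z : C) (f : hom X Y) : comp (zerom Y Z) f = zerom X Z.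
Proof. by rewrite /zerom -comp_assoc (zto_uniq (comp (zto Y) f)). Qed.
Lemma comp_zr (X Y Z : C) (h : hom Y Z) : comp h (zerom X Y) = zerom X Z.
Proof. by rewrite /zerom comp_assoc (zfrom_uniq (comp h (zfrom Y))). Qed.

Lemma ext2 (A B T : C) (h h' : hom (cop A B) T) :
  comp h (in1 A B) = comp h' (in1 A B) -> comp h (in2 A B) = comp h' (in2 A B) -> h = h'.
Proof.
move=> e1 e2; rewrite (copair_uniq (erefl _) (erefl _) : h = _).
by apply: esym; apply: copair_uniq; rewrite -?e1 -?e2.
Qed.

Lemma ext3 (A B D T : C) (h h' : hom (cop (cop A B) D) T) :
  comp h (comp (in1 _ _) (in1 A B)) = comp h' (comp (in1 _ _) (in1 A B)) ->
  comp h (comp (in1 _ _) (in2 A B)) = comp h' (comp (in1 _ _) (in2 A B)) ->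
  comp h (in2 _ D) = comp h' (in2 _ D) -> h = h'.
Proof.
move=> e1 e2 e3; apply: ext2 => //; apply: ext2; by rewrite -!comp_assoc.
Qed.
End CatL.

Lemma copair_in1' (C : PCat) (X Y Z W : C) (f : hom X Z) (g : hom Y Z) (k : hom W X) :
  comp (copair f g) (comp (in1 X Y) k) = comp f k.
Proof. by rewrite comp_assoc copair_in1. Qed.
Lemma copair_in2' (C : PCat) (X Y Z W : C) (f : hom X Z) (g : hom Y Z) (k : hom W Y) :
  comp (copair f g) (comp (in2 X Y) k) = comp g k.
Proof. by rewrite comp_assoc copair_in2. Qed.

Ltac msimp :=
  rewrite -?comp_assoc;
  repeat (rewrite ?copair_in1 ?copair_in2 ?copair_in1' ?copair_in2' ?comp_idl ?comp_idr ?comp_zl ?comp_zr -?comp_assoc).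

Section T.
Variables (C : PCat) (E : C) (M : ProtoQuad E).

Lemma h_epsm (X Y : C) (h : hom X Y) b1 b2 b3 :
  comp h (epsm X b1 b2 b3) = comp (epsm Y b1 b2 b3) (summ (summ h h) h).
Proof.
apply: ext3; rewrite /epsm /summ; case: b1; case: b2; case: b3 => /=; by msimp.
Qed.
Lemma h_fold (X Y : C) (h : hom X Y) : comp h (fold X) = comp (fold Y) (summ h h).
Proof. apply: ext2; rewrite /fold /summ; by msimp. Qed.
Lemma h_ret1 (X Y : C) (h : hom X Y) : comp h (ret1 X X) = comp (ret1 Y Y) (summ h h).
Proof. apply: ext2; rewrite /ret1 /summ; by msimp. Qed.
Lemma h_ret2 (X Y : C) (h : hom X Y) : comp h (ret2 X X) = comp (ret2 Y Y) (summ h h).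
Proof. apply: ext2; rewrite /ret2 /summ; by msimp. Qed.
Lemma h_copair (A B Y Z : C) (h : hom Y Z) (f : hom A Y) (g : hom B Y) :
  comp h (copair f g) = copair (comp h f) (comp h g).
Proof. apply: ext2; by msimp. Qed.

Lemma tmap_rel (X Y : C) (h : hom X Y) t :
  tensor_rel t -> tensor_rel (tmap (M:=M) h t).
Proof.
case=> /=.
- move=> f be a; rewrite /tmap /= comp_assoc; exact: tr1.
- move=> f a b; exact: tr2.
- move=> xi a; rewrite /tmap /= !comp_assoc !h_epsm -!(comp_assoc _ (summ (summ h h) h) xi).
  exact: (tr3 (comp (summ (summ h h) h) xi) a).
- move=> f g al be m; rewrite /tmap /= !comp_assoc; exact: tr4.
- move=> f g m n; exact: tr5.
- move=> xi g m; rewrite /tmap /=.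
  rewrite (comp_assoc h (fold X) xi) (comp_assoc h (ret1 X X) xi) (comp_assoc h (ret2 X X) xi).
  rewrite h_fold h_ret1 h_ret2 -!comp_assoc.
  exact: tr6.
- move=> f g m; exact: tr7.
- move=> f m; exact: tr8.
- move=> f g ga a; rewrite /tmap /= comp_assoc h_copair.
  rewrite (comp_assoc h f) (comp_assoc h g); exact: tr9.
Qed.

Lemma teq_tmap (X Y : C) (h : hom X Y) t u :
  teq t u -> teq (tmap (M:=M) h t) (tmap h u).
Proof.
rewrite /teq; elim=> /=.
- move=> ?; exact: pe_refl.
- move=> ??? IH; exact: pe_sym IH.
- move=> ???? IH1 ? IH2; exact: pe_trans IH1 IH2.
- move=> ???? ? IH1 ? IH2; exact: pe_add IH1 IH2.
- move=> ?? ? IH; exact: pe_opp IH.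
- move=> *; exact: pe_assoc.
- move=> *; exact: pe_comm.
- move=> *; exact: pe_zerol.
- move=> *; exact: pe_oppl.
- move=> t0 r; apply: pe_rel; exact: tmap_rel.
Qed.

Lemma tmap_comp (X Y Z : C) (h : hom Y Z) (k : hom X Y) t :
  tmap (M:=M) (comp h k) t = tmap h (tmap k t).
Proof.
elim: t => //= [[f a|f g m]|t IHt u IHu|t IHt]; rewrite /tmap /= ?comp_assoc //.
- by rewrite -/(tmap _ _) -/(tmap _ _) -/(tmap _ _) -/(tmap _ _) IHt IHu.
- by rewrite -/(tmap _ _) -/(tmap _ _) -/(tmap _ _) IHt.
Qed.
End T.

Section Mor.
Variables (C : PCat) (X Y Z : C).
Local Notation W := (cop (cop X Y) Z).
Definition iX : hom X W := comp (in1 _ Z) (in1 X Y).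
Definition iY : hom Y W := comp (in1 _ Z) (in2 X Y).
Definition iZ : hom Z W := in2 (cop X Y) Z.
Definition pk (A : C) (b : bool) (h : hom A W) : hom A W := if b then h else zerom A W.
Definition eS (b1 b2 b3 : bool) : hom W W :=
  copair (copair (pk b1 iX) (pk b2 iY)) (pk b3 iZ).
Definition k3 : hom W (cop (cop W W) W) :=
  copair (copair (comp (in1 _ W) (comp (in1 W W) iX)) (comp (in1 _ W) (comp (in2 W W) iY)))
         (comp (in2 _ W) iZ).
Definition pk2 (A : C) (c d : bool) (h : hom A W) : hom A (cop W W) :=
  if c then comp (in1 W W) h else if d then comp (in2 W W) h else zerom A (cop W W).
Definition dS (c1 c2 c3 d1 d2 d3 : bool) : hom W (cop W W) :=
  copair (copair (pk2 c1 d1 iX) (pk2 c2 d2 iY)) (pk2 c3 d3 iZ).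

Ltac go := apply: ext3; rewrite /eS /k3 /dS /pk /pk2 /iX /iY /iZ /epsm /fold /ret1 /ret2 /summ /=; by msimp.

Lemma epsm_k b1 b2 b3 : comp (epsm W b1 b2 b3) k3 = eS b1 b2 b3.
Proof. case: b1; case: b2; case: b3; go. Qed.
Lemma eS_id : eS true true true = idm W.
Proof. go. Qed.
Lemma eS_comp c1 c2 c3 b1 b2 b3 :
  comp (eS c1 c2 c3) (eS b1 b2 b3) = eS (c1 && b1) (c2 && b2) (c3 && b3).
Proof. case: c1; case: c2; case: c3; case: b1; case: b2; case: b3; go. Qed.
Lemma fold_dS c1 c2 c3 d1 d2 d3 :
  comp (fold W) (dS c1 c2 c3 d1 d2 d3) = eS (c1 || d1) (c2 || d2) (c3 || d3).
Proof. case: c1; case: c2; case: c3; case: d1; case: d2; case: d3; go. Qed.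
Lemma ret1_dS c1 c2 c3 d1 d2 d3 :
  comp (ret1 W W) (dS c1 c2 c3 d1 d2 d3) = eS c1 c2 c3.
Proof. case: c1; case: c2; case: c3; case: d1; case: d2; case: d3; go. Qed.
Lemma ret2_dS c1 c2 c3 d1 d2 d3 : ~~ (c1 && d1) -> ~~ (c2 && d2) -> ~~ (c3 && d3) ->
  comp (ret2 W W) (dS c1 c2 c3 d1 d2 d3) = eS d1 d2 d3.
Proof. case: c1; case: c2; case: c3; case: d1; case: d2; case: d3 => //= _ _ _; go. Qed.

Lemma e110 : eS true true false = comp (in1 _ Z) (ret1 (cop X Y) Z).
Proof. go. Qed.
Lemma e101 : eS true false true = comp (summ (in1 X Y) (idm Z)) (summ (ret1 X Y) (idm Z)).
Proof. go. Qed.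
Lemma e011 : eS false true true = comp (summ (in2 X Y) (idm Z)) (summ (ret2 X Y) (idm Z)).
Proof. go. Qed.
Lemma e100 : eS true false false =
  comp (comp (in1 _ Z) (comp (in1 X Y) (ret1 X Y))) (ret1 (cop X Y) Z).
Proof. go. Qed.
Lemma e010 : eS false true false =
  comp (comp (in1 _ Z) (comp (in2 X Y) (ret2 X Y))) (ret1 (cop X Y) Z).
Proof. go. Qed.
Lemma e001 : eS false false true = comp (in2 _ Z) (ret2 (cop X Y) Z).
Proof. go. Qed.
End Mor.

Lemma z7 (V : zmodType) (a b c d x y z : V) :
  a - b - c - d + (x + (y + z)) = 0 -> a = b + c + d - (x + y + z).
Proof.
move=> h; apply/eqP; rewrite -subr_eq0 -h; apply/eqP.
by rewrite !opprD !opprK !addrA.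
Qed.
Lemma zsub (V : zmodType) (a b c : V) : a - (b + c) = 0 -> a = b + c.
Proof. by move/eqP; rewrite subr_eq0 => /eqP. Qed.
Lemma zsub1 (V : zmodType) (a b : V) : a - b = 0 -> a = b.
Proof. by move/eqP; rewrite subr_eq0 => /eqP. Qed.
Lemma zdbl (V : zmodType) (x : V) : x = x + x -> x = 0.
Proof. by rewrite -{1}[x]addr0 => /addrI. Qed.

Lemma z9 (V : zmodType) (a11 a12 a13 a21 a22 a23 a31 a32 a33 : V) :
  a11 + a12 + a13 + (a21 + a22 + a23) + (a31 + a32 + a33) =
  a11 + a12 + (a21 + a22) + (a11 + a13 + (a31 + a33)) + (a22 + a23 + (a32 + a33))
  - (a11 + a22 + a33).
Proof.
apply/eqP; rewrite eq_sym subr_eq; apply/eqP.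
pose f i := nth 0 [:: a11; a12; a13; a21; a22; a23; a31; a32; a33] i.
have H : \sum_(i <- [:: 0; 1; 3; 4; 0; 2; 6; 8; 4; 5; 7; 8]%N) f i =
         \sum_(i <- [:: 0; 1; 2; 3; 4; 5; 6; 7; 8; 0; 4; 8]%N) f i.
  by apply: perm_big.
move: H; rewrite !big_cons big_nil /f /= !addr0 !addrA => ->.
by [].
Qed.

Section FE.
Variables (G : Type) (V : zmodType).
Lemma feval_ext (F1 F2 : G -> V) t : F1 =1 F2 -> feval F1 t = feval F2 t.
Proof. by move=> h; elim: t => //= [t IHt u IHu|t IHt]; rewrite ?IHt ?IHu. Qed.
Lemma feval_add (F1 F2 : G -> V) t :
  feval (fun x => F1 x + F2 x) t = feval F1 t + feval F2 t.
Proof.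
elim: t => //= [|t IHt u IHu|t IHt]; first by rewrite addr0.
  by rewrite IHt IHu addrACA.
by rewrite IHt opprD.
Qed.
Lemma feval_opp (F1 : G -> V) t : feval (fun x => - F1 x) t = - feval F1 t.
Proof.
elim: t => //= [|t IHt u IHu|t IHt]; first by rewrite oppr0.
  by rewrite IHt IHu opprD.
by rewrite IHt.
Qed.
Lemma feval_sub (F1 F2 : G -> V) t :
  feval (fun x => F1 x - F2 x) t = feval F1 t - feval F2 t.
Proof. by rewrite feval_add feval_opp. Qed.
End FE.

Section Main.
Variables (C : PCat) (E : C) (M : ProtoQuad E) (X Y Z : C).
Local Notation W := (cop (cop X Y) Z).
Local Notation cl := (@cls (tgen M W) (@tensor_rel C E M W)).
Local Notation e := (@eS C X Y Z).

Lemma gen1 (f : hom E W) a :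
  cl (FG (TG1 f a)) =
  cl (FG (TG1 (comp (e true true false) f) a)) + cl (FG (TG1 (comp (e true false true) f) a))
  + cl (FG (TG1 (comp (e false true true) f) a))
  - (cl (FG (TG1 (comp (e true false false) f) a)) + cl (FG (TG1 (comp (e false true false) f) a))
  + cl (FG (TG1 (comp (e false false true) f) a))).
Proof.
have := cls_rel (tr3 (comp (k3 X Y Z) f) a).
move=> /= h; rewrite /FSub !clsD !clsN in h.
rewrite !(comp_assoc _ (k3 X Y Z) f) !epsm_k eS_id comp_idl in h.
exact: z7 h.
Qed.

Definition B (m : Mee M) (f g : hom E W) := cl (FG (TG2 f g m)).

Lemma split1 c1 c2 c3 d1 d2 d3 m f g : ~~ (c1 && d1) -> ~~ (c2 && d2) -> ~~ (c3 && d3) ->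
  B m (comp (e (c1 || d1) (c2 || d2) (c3 || d3)) f) g =
  B m (comp (e c1 c2 c3) f) g + B m (comp (e d1 d2 d3) f) g.
Proof.
move=> h1 h2 h3.
have := cls_rel (tr6 (comp (dS X Y Z c1 c2 c3 d1 d2 d3) f) g m).
rewrite /FSub !clsD clsN clsD !comp_assoc fold_dS ret1_dS ret2_dS // => h; exact: zsub h.
Qed.

Lemma tr7B m f g : B m f g = B (Tinv M m) g f.
Proof.
have := cls_rel (tr7 f g m); rewrite /FSub clsD clsN => h; exact: zsub1 h.
Qed.

Lemma tr7B' m f g : B (Tinv M m) g f = B m f g.
Proof. by rewrite tr7B T_invol. Qed.

Lemma split2 c1 c2 c3 d1 d2 d3 m f g : ~~ (c1 && d1) -> ~~ (c2 && d2) -> ~~ (c3 && d3) ->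
  B m f (comp (e (c1 || d1) (c2 || d2) (c3 || d3)) g) =
  B m f (comp (e c1 c2 c3) g) + B m f (comp (e d1 d2 d3) g).
Proof.
move=> h1 h2 h3; by rewrite [LHS]tr7B split1 // !tr7B'.
Qed.

Lemma zero1 m f g : B m (comp (e false false false) f) g = 0.
Proof. have h := (@split1 false false false false false false m f g isT isT isT); exact: zdbl h. Qed.
Lemma zero2 m f g : B m f (comp (e false false false) g) = 0.
Proof. have h := (@split2 false false false false false false m f g isT isT isT); exact: zdbl h. Qed.

Lemma exp1 m f g b1 b2 b3 : B m (comp (e b1 b2 b3) f) g =
  B m (comp (e b1 false false) f) g + B m (comp (e false b2 false) f) g
  + B m (comp (e false false b3) f) g.
Proof.
have := @split1 b1 b2 false false false b3 m f g.
rewrite !andbF !orbF /= => /(_ isT isT isT) ->.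
have := @split1 b1 false false false b2 false m f g.
by rewrite !andbF !orbF /= => /(_ isT isT isT) ->.
Qed.
Lemma exp2 m f g b1 b2 b3 : B m f (comp (e b1 b2 b3) g) =
  B m f (comp (e b1 false false) g) + B m f (comp (e false b2 false) g)
  + B m f (comp (e false false b3) g).
Proof.
have := @split2 b1 b2 false false false b3 m f g.
rewrite !andbF !orbF /= => /(_ isT isT isT) ->.
have := @split2 b1 false false false b2 false m f g.
by rewrite !andbF !orbF /= => /(_ isT isT isT) ->.
Qed.

Lemma expand m f g b1 b2 b3 c1 c2 c3 :
  B m (comp (e b1 b2 b3) f) (comp (e c1 c2 c3) g) =
  B m (comp (e b1 false false) f) (comp (e c1 false false) g) +
  B m (comp (e b1 false false) f) (comp (e false c2 false) g) +
  B m (comp (e b1 false false) f) (comp (e false false c3) g) +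
  (B m (comp (e false b2 false) f) (comp (e c1 false false) g) +
  B m (comp (e false b2 false) f) (comp (e false c2 false) g) +
  B m (comp (e false b2 false) f) (comp (e false false c3) g)) +
  (B m (comp (e false false b3) f) (comp (e c1 false false) g) +
  B m (comp (e false false b3) f) (comp (e false c2 false) g) +
  B m (comp (e false false b3) f) (comp (e false false c3) g)).
Proof.
rewrite exp1 (exp2 m (comp (e b1 false false) f) g c1 c2 c3)
  (exp2 m (comp (e false b2 false) f) g c1 c2 c3) (exp2 m (comp (e false false b3) f) g c1 c2 c3).
by [].
Qed.

Lemma gen2 m f g :
  B m f g =
  B m (comp (e true true false) f) (comp (e true true false) g)
  + B m (comp (e true false true) f) (comp (e true false true) g)
  + B m (comp (e false true true) f) (comp (e false true true) g)
  - (B m (comp (e true false false) f) (comp (e true false false) g)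
  + B m (comp (e false true false) f) (comp (e false true false) g)
  + B m (comp (e false false true) f) (comp (e false false true) g)).
Proof.
have -> : B m f g = B m (comp (e true true true) f) (comp (e true true true) g)
  by rewrite eS_id !comp_idl.
rewrite (expand m f g true true true true true true) (expand m f g true true false true true false).
rewrite (expand m f g true false true true false true) (expand m f g false true true false true true).
rewrite !zero1 !zero2 !addr0 !add0r.
exact: z9.
Qed.

Lemma gen (x : tgen M W) : cl (FG x) =
  cl (FG (tgen_map (e true true false) x)) + cl (FG (tgen_map (e true false true) x))
  + cl (FG (tgen_map (e false true true) x))
  - (cl (FG (tgen_map (e true false false) x)) + cl (FG (tgen_map (e false true false) x))
  + cl (FG (tgen_map (e false false true) x))).
Proof. case: x => [f a|f g m] /=; [exact: gen1 | exact: gen2]. Qed.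

Lemma cl_tmap (h : hom W W) t :
  cl (tmap h t) = feval (fun x => cl (FG (tgen_map h x))) t.
Proof. by elim: t => //= [t IHt u IHu|t IHt]; rewrite ?clsD ?clsN -?IHt -?IHu. Qed.

Lemma decomp t : cl t =
  cl (tmap (e true true false) t) + cl (tmap (e true false true) t)
  + cl (tmap (e false true true) t)
  - (cl (tmap (e true false false) t) + cl (tmap (e false true false) t)
  + cl (tmap (e false false true) t)).
Proof.
rewrite !cl_tmap {1}cls_feval (feval_ext t gen) feval_sub !feval_add.
by [].
Qed.

Lemma vanish (W' : C) (r : hom W W') (s : hom W' W) t :
  teq (tmap r t) FZ -> cl (tmap (comp s r) t) = 0.
Proof. move=> h; rewrite tmap_comp; apply/cls_eqP; exact: (teq_tmap s h). Qed.
End Main.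

Theorem proposition6p5 (C : PCat) (E : C) (M : ProtoQuad E) :
  tensor_quadratic M.
Proof.
move=> X Y Z t [h1 [h2 [h3 h4]]]; apply/cls_eqP.
rewrite decomp e110 e101 e011 e100 e010 e001.
rewrite (vanish _ h1) (vanish _ h2) (vanish _ h3) (vanish _ h4) (vanish _ h1) (vanish _ h1).
by rewrite !addr0 subrr.
Qed.
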